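(* Let $\alpha\in(1,3)$, $n=2$ and $\mu>0$, and consider the planar Maxwell-ring potential described in the context, in polar coordinates $u=re^{i\varphi}$. Then its critical points are exactly the $\mathbb{Z}_2$-orbits (orbits under $u\mapsto -u$) of: two saddle points $u=r_2$ and $u=r_1$ with $0<r_2<1<r_1$, and one minimum point $u=r_3e^{i\pi/2}$ with $r_3>1$; there are no other critical points.
   Context: Let $\zeta=\pi$, $\phi_\alpha'(r)=-r^{-\alpha}$, $s=2^{-\alpha}$ (i.e. $s=2^{-\alpha}\sum_{j=1}^{n-1}\sin^{-(\alpha-1)}(j\zeta/2)$ with $n=2$). The (rescaled) planar potential of a satellite attracted by two unit masses at $\pm1$ and a central mass $\mu$ at $0$ (identifying $\mathbb{R}^2=\mathbb{C}$) is $$V(u)=\frac12\|u\|^2+\sum_{j=1}^2\frac1{s+\mu}\phi_\alpha(\|u-e^{ij\pi}\|)+\frac{\mu}{s+\mu}\phi_\alpha(\|u\|).$$ *)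

(* Defs.v *)
From Stdlib Require Import Reals.
From Coquelicot Require Import Coquelicot.
Open Scope R_scope.

(* phi_alpha with phi_alpha'(r) = - r^(-alpha), r > 0, alpha > 1:
   phi_alpha(r) = r^(1-alpha)/(alpha-1) (additive constant irrelevant). *)
Definition phi (alpha r : R) : R := Rpower r (1 - alpha) / (alpha - 1).

(* s = 2^{-alpha} * sum_{j=1}^{n-1} sin^{-(alpha-1)}(j zeta/2) with n = 2, zeta = pi;
   sin(pi/2) = 1 so s = 2^{-alpha}. *)
Definition s_const (alpha : R) : R := Rpower 2 (- alpha).

Definition dist2 (p q : R * R) : R :=
  sqrt ((fst p - fst q) ^ 2 + (snd p - snd q) ^ 2).

(* V(u) = |u|^2/2 + sum_{j=1,2} phi(|u - e^{i j pi}|)/(s+mu) + mu/(s+mu) phi(|u|);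
   e^{i pi} = -1, e^{2 i pi} = 1. *)
Definition V (alpha mu : R) (u : R * R) : R :=
  (fst u ^ 2 + snd u ^ 2) / 2
  + / (s_const alpha + mu) * phi alpha (dist2 u (-1, 0))
  + / (s_const alpha + mu) * phi alpha (dist2 u (1, 0))
  + mu / (s_const alpha + mu) * phi alpha (dist2 u (0, 0)).

Definition in_domain (u : R * R) : Prop :=
  u <> (0, 0) /\ u <> (1, 0) /\ u <> (-1, 0).

Definition critical_point (alpha mu : R) (u : R * R) : Prop :=
  in_domain u /\ filterdiff (V alpha mu) (locally u) (fun _ : R * R => 0).

Definition local_min_point (alpha mu : R) (u : R * R) : Prop :=
  exists eps : R, 0 < eps /\
    forall q : R * R, in_domain q -> dist2 q u < eps -> V alpha mu u <= V alpha mu q.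

Definition saddle_point (alpha mu : R) (u : R * R) : Prop :=
  critical_point alpha mu u /\
  forall eps : R, 0 < eps ->
    (exists q, in_domain q /\ dist2 q u < eps /\ V alpha mu q < V alpha mu u) /\
    (exists q, in_domain q /\ dist2 q u < eps /\ V alpha mu u < V alpha mu q).

(* Main.v *)
Require Import Defs.
From Stdlib Require Import Reals.
From Coquelicot Require Import Coquelicot.
Open Scope R_scope.
From Stdlib Require Import Reals Lra Psatz.
From Coquelicot Require Import Coquelicot.
Open Scope R_scope.

Lemma Rpow_pos x p : 0 < Rpower x p.
Proof. unfold Rpower; apply exp_pos. Qed.

Lemma ln_le_sub1 t : 0 < t -> ln t <= t - 1.
Proof. intros. pose proof (exp_ineq1_le (ln t)). rewrite exp_ln in H0; lra. Qed.

Lemma Rpower_m1 a : 0 < a -> Rpower a (-1) = / a.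
Proof. intros. replace (-1) with (- (1)) by ring. rewrite Rpower_Ropp, Rpower_1; auto. Qed.

Lemma Rpower_pm1 a p : 0 < a -> Rpower a (p - 1) = Rpower a p / a.
Proof. intros. replace (p - 1) with (p + -1) by ring. rewrite Rpower_plus, Rpower_m1; auto. Qed.

Lemma tangent a w p : 0 < a -> 0 < w -> p <= 0 ->
  Rpower a p + p * Rpower a (p - 1) * (w - a) <= Rpower w p.
Proof.
  intros Ha Hw Hp.
  assert (Ht : 0 < w / a) by (apply Rdiv_lt_0_compat; auto).
  replace w with (a * (w / a)) at 2 by (field; lra).
  rewrite <- Rpower_mult_distr by auto.
  rewrite Rpower_pm1 by auto.
  assert (H1 : 1 + p * (w / a - 1) <= Rpower (w / a) p).
  { unfold Rpower. pose proof (exp_ineq1_le (p * ln (w/a))).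
    pose proof (ln_le_sub1 _ Ht). nra. }
  pose proof (Rpow_pos a p).
  replace (Rpower a p + p * (Rpower a p / a) * (w - a)) with
     (Rpower a p * (1 + p * (w / a - 1))) by (field; lra).
  apply Rmult_le_compat_l; lra.
Qed.

Lemma Rpow_lt_base a b p : 0 < a < b -> p < 0 -> Rpower b p < Rpower a p.
Proof.
  intros [Ha Hb] Hp. unfold Rpower. apply exp_increasing.
  pose proof (ln_increasing a b Ha Hb). nra.
Qed.

Lemma Rpow_le_base a b p : 0 < a <= b -> p <= 0 -> Rpower b p <= Rpower a p.
Proof.
  intros [Ha Hb] Hp. unfold Rpower. 
  pose proof (ln_le a b Ha Hb).
  destruct (Req_dec (p * ln b) (p * ln a)) as [E|E]. rewrite E; lra.
  left. apply exp_increasing. nra.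
Qed.

Lemma Rpow_le_exp_ge1 w p q : 1 <= w -> q <= p -> Rpower w q <= Rpower w p.
Proof.
  intros Hw Hqp. unfold Rpower.
  assert (0 <= ln w) by (rewrite <- ln_1; apply ln_le; lra).
  destruct (Req_dec (q * ln w) (p * ln w)) as [E|E]. rewrite E; lra.
  left. apply exp_increasing. nra.
Qed.

Lemma Rpow_le_exp_le1 w p q : 0 < w <= 1 -> q <= p -> Rpower w p <= Rpower w q.
Proof.
  intros Hw Hqp. unfold Rpower.
  assert (ln w <= 0) by (rewrite <- ln_1; apply ln_le; lra).
  destruct (Req_dec (q * ln w) (p * ln w)) as [E|E]. rewrite E; lra.
  left. apply exp_increasing. nra.
Qed.

Lemma Rpow_sq t p : 0 < t -> Rpower (t ^ 2) p = Rpower t (2 * p).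
Proof.
  intros. replace (t ^ 2) with (Rpower t 2).
  rewrite Rpower_mult; auto.
  replace 2 with (INR 2) by (simpl; lra). rewrite Rpower_pow; auto.
Qed.

Lemma Rpow_1 p : Rpower 1 p = 1.
Proof. unfold Rpower. rewrite ln_1, Rmult_0_r, exp_0. auto. Qed.
Lemma fd_lin1 (u : R * R) (a : R) :
  filterdiff (fun v : R * R => fst v - a) (locally u) (fun v => fst v).
Proof.
  apply filterdiff_ext_lin with (fun v => plus (fst v) zero).
  apply (filterdiff_plus_fct (F := locally u) (fun v : R*R => fst v) (fun _ => - a)).
  apply filterdiff_linear, is_linear_fst.
  apply filterdiff_const.
  intros; rewrite plus_zero_r; auto.
Qed.

Lemma fd_lin2 (u : R * R) (a : R) :
  filterdiff (fun v : R * R => snd v - a) (locally u) (fun v => snd v).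
Proof.
  apply filterdiff_ext_lin with (fun v => plus (snd v) zero).
  apply (filterdiff_plus_fct (F := locally u) (fun v : R*R => snd v) (fun _ => - a)).
  apply filterdiff_linear, is_linear_snd.
  apply filterdiff_const.
  intros; rewrite plus_zero_r; auto.
Qed.

Lemma fd_sq (u : R * R) (g l : R * R -> R) :
  filterdiff g (locally u) l ->
  filterdiff (fun v => g v ^ 2) (locally u) (fun v => 2 * g u * l v).
Proof.
  intros H.
  apply (filterdiff_ext (fun v => mult (g v) (g v))).
  intros; unfold mult; simpl; ring.
  eapply filterdiff_ext_lin.
  apply (@filterdiff_mult_fct R_AbsRing _ g g u l l Rmult_comm H H).
  intros; unfold plus, mult; simpl; ring.
Qed.

Lemma fd_plus (u : R * R) (f g lf lg : R * R -> R) :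
  filterdiff f (locally u) lf -> filterdiff g (locally u) lg ->
  filterdiff (fun v => f v + g v) (locally u) (fun v => lf v + lg v).
Proof. intros. exact (filterdiff_plus_fct (F := locally u) f g lf lg H H0). Qed.

Lemma fd_scal (u : R * R) (k : R) (f lf : R * R -> R) :
  filterdiff f (locally u) lf ->
  filterdiff (fun v => k * f v) (locally u) (fun v => k * lf v).
Proof. intros. exact (filterdiff_scal_r_fct (F := locally u) k f lf Rmult_comm H). Qed.

Definition sqd (u p : R * R) : R := (fst u - fst p) ^ 2 + (snd u - snd p) ^ 2.

Lemma fd_sqd (u p : R * R) :
  filterdiff (fun v => sqd v p) (locally u)
    (fun v => 2 * (fst u - fst p) * fst v + 2 * (snd u - snd p) * snd v).
Proof.
  unfold sqd.
  eapply filterdiff_ext_lin.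
  apply fd_plus.
  apply (fd_sq u (fun v => fst v - fst p)), fd_lin1.
  apply (fd_sq u (fun v => snd v - snd p)), fd_lin2.
  intros; unfold plus; simpl; ring.
Qed.

Definition Em (a w : R) : R := Rpower w (- (a + 1) / 2).
Definition Kf (a w : R) : R := Rpower w ((1 - a) / 2) / (a - 1).

Lemma phi_sqrt a w : 1 < a -> 0 < w -> phi a (sqrt w) = Kf a w.
Proof.
  intros Ha Hw. unfold phi, Kf. rewrite <- Rpower_sqrt by auto.
  rewrite Rpower_mult. f_equal. f_equal. field.
Qed.

Lemma dKf a w : 1 < a -> 0 < w -> is_derive (Kf a) w (- (1/2) * Em a w).
Proof.
  intros Ha Hw. unfold Kf, Em.
  apply is_derive_ext with (fun t => / (a - 1) * Rpower t ((1 - a) / 2)).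
  { intros; simpl; field; lra. }
  apply is_derive_Reals.
  replace (- (1/2) * Rpower w (- (a + 1) / 2)) with
    (/ (a - 1) * ((1 - a) / 2 * Rpower w ((1 - a) / 2 - 1))).
  apply derivable_pt_lim_scal. apply derivable_pt_lim_power; auto.
  replace ((1 - a) / 2 - 1) with (- (a + 1) / 2) by field. field; lra.
Qed.

Lemma dphi a w : 1 < a -> 0 < w ->
  is_derive (fun t => phi a (sqrt t)) w (- (1/2) * Em a w).
Proof.
  intros Ha Hw. apply is_derive_ext_loc with (Kf a).
  exists (mkposreal w Hw). intros t Ht.
  rewrite phi_sqrt; auto.
  unfold ball in Ht; simpl in Ht; unfold AbsRing_ball, abs, minus, plus, opp in Ht; simpl in Ht.
  apply Rabs_def2 in Ht. lra.
  apply dKf; auto.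
Qed.

Lemma fd_term a (u p : R * R) : 1 < a -> 0 < sqd u p ->
  filterdiff (fun v => phi a (dist2 v p)) (locally u)
    (fun v => - (1/2) * Em a (sqd u p) *
       (2 * (fst u - fst p) * fst v + 2 * (snd u - snd p) * snd v)).
Proof.
  intros Ha Hs.
  pose proof (dphi a _ Ha Hs) as D. unfold is_derive in D.
  pose proof (filterdiff_comp' (fun v => sqd v p) (fun t => phi a (sqrt t)) u _ _ (fd_sqd u p) D) as H.
  simpl in H. eapply filterdiff_ext_lin. exact H.
  intros; unfold scal; simpl; unfold mult; simpl; ring.
Qed.

Lemma fd_quad (u : R * R) :
  filterdiff (fun v : R * R => (fst v ^ 2 + snd v ^ 2) / 2) (locally u)
    (fun v => fst u * fst v + snd u * snd v).
Proof.
  apply (filterdiff_ext (fun v : R * R => / 2 * (fst v ^ 2 + snd v ^ 2))).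
  { intros; simpl; field. }
  eapply filterdiff_ext_lin.
  apply fd_scal, fd_plus.
  apply (fd_sq u (fun v => fst v)), filterdiff_linear, is_linear_fst.
  apply (fd_sq u (fun v => snd v)), filterdiff_linear, is_linear_snd.
  intros; simpl; field.
Qed.

Definition cc (a m : R) : R := / (s_const a + m).

Definition Dx (a m : R) (u : R * R) : R :=
  fst u - cc a m * ((fst u - -1) * Em a (sqd u (-1, 0)) + (fst u - 1) * Em a (sqd u (1, 0))
                   + m * (fst u - 0) * Em a (sqd u (0, 0))).
Definition Dy (a m : R) (u : R * R) : R :=
  snd u - cc a m * ((snd u - 0) * Em a (sqd u (-1, 0)) + (snd u - 0) * Em a (sqd u (1, 0))
                   + m * (snd u - 0) * Em a (sqd u (0, 0))).

Lemma gradV a m u : 1 < a -> 0 < m -> 0 < sqd u (-1, 0) -> 0 < sqd u (1, 0) -> 0 < sqd u (0, 0) ->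
  filterdiff (V a m) (locally u) (fun v => fst v * Dx a m u + snd v * Dy a m u).
Proof.
  intros Ha Hm H1 H2 H3. unfold V.
  eapply filterdiff_ext_lin.
  apply fd_plus. apply fd_plus. apply fd_plus.
  apply fd_quad.
  apply fd_scal, fd_term; auto.
  apply fd_scal, fd_term; auto.
  apply (filterdiff_ext (fun v => (m / (s_const a + m)) * phi a (dist2 v (0, 0)))).
  { intros; reflexivity. }
  apply fd_scal, fd_term; auto.
  intros v. unfold Dx, Dy, cc. unfold Rdiv.
  destruct v as [v1 v2]. cbn [fst snd].
  assert (0 < s_const a) by apply Rpow_pos.
  match goal with |- ?A = ?B => change (@eq R A B) end. field. lra.
Qed.

Lemma fd_zero_iff (f : R * R -> R) (u : R * R) (A B : R) :
  filterdiff f (locally u) (fun v => fst v * A + snd v * B) ->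
  (filterdiff f (locally u) (fun _ => 0) <-> (A = 0 /\ B = 0)).
Proof.
  intros H. destruct u as [x y].
  assert (E : forall g, filterdiff f (locally (x, y)) g ->
     filterdiff (fun v : R * R => (fun a b => f (a, b)) (fst v) (snd v)) (locally (x, y)) g).
  { intros g Hg. apply (filterdiff_ext f); auto. intros [a b]; reflexivity. }
  split.
  - intros H0.
    assert (D1 : differentiable_pt_lim (fun a b => f (a, b)) x y A B).
    { apply filterdiff_differentiable_pt_lim. apply E; auto. }
    assert (D2 : differentiable_pt_lim (fun a b => f (a, b)) x y 0 0).
    { apply filterdiff_differentiable_pt_lim. apply E.
      eapply filterdiff_ext_lin. exact H0. intros; simpl; ring. }
    apply differentiable_pt_lim_unique in D1, D2. destruct D1, D2. split; congruence.
  - intros [-> ->]. eapply filterdiff_ext_lin. exact H. intros; simpl. ring.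
Qed.

Lemma sqd_pos u p : u <> p -> 0 < sqd u p.
Proof.
  intros H. destruct u as [x y], p as [a b]. unfold sqd; simpl.
  destruct (Req_dec x a), (Req_dec y b).
  - subst; congruence.
  - assert (y - b <> 0) by lra. pose proof (pow2_ge_0 (x - a)).
    assert (0 < (y - b) ^ 2) by (simpl; rewrite Rmult_1_r; apply Rsqr_pos_lt; auto). lra.
  - assert (x - a <> 0) by lra. pose proof (pow2_ge_0 (y - b)).
    assert (0 < (x - a) ^ 2) by (simpl; rewrite Rmult_1_r; apply Rsqr_pos_lt; auto). lra.
  - assert (x - a <> 0) by lra. pose proof (pow2_ge_0 (y - b)).
    assert (0 < (x - a) ^ 2) by (simpl; rewrite Rmult_1_r; apply Rsqr_pos_lt; auto). lra.
Qed.

Lemma crit_iff a m u : 1 < a -> 0 < m ->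
  (critical_point a m u <-> (in_domain u /\ Dx a m u = 0 /\ Dy a m u = 0)).
Proof.
  intros Ha Hm. unfold critical_point. split.
  - intros [Hd Hf]. split; auto. destruct Hd as (H0 & H1 & H2).
    eapply fd_zero_iff; [apply gradV|]; auto; apply sqd_pos; auto.
  - intros [Hd [HA HB]]. split; auto. destruct Hd as (H0 & H1 & H2).
    eapply fd_zero_iff; [apply gradV|]; auto; apply sqd_pos; auto.
Qed.

Lemma Ktan a w w0 : 1 < a -> 0 < w -> 0 < w0 ->
  Kf a w0 - (1/2) * Em a w0 * (w - w0) <= Kf a w.
Proof.
  intros Ha Hw Hw0. unfold Kf, Em.
  pose proof (tangent w0 w ((1 - a) / 2) Hw0 Hw ltac:(lra)) as T.
  replace ((1 - a) / 2 - 1) with (- (a + 1) / 2) in T by field.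
  apply Rmult_le_reg_r with (a - 1). lra.
  replace ((Rpower w0 ((1 - a) / 2) / (a - 1) - 1 / 2 * Rpower w0 (- (a + 1) / 2) * (w - w0)) * (a - 1))
    with (Rpower w0 ((1 - a) / 2) + (1 - a) / 2 * Rpower w0 (- (a + 1) / 2) * (w - w0)) by (field; lra).
  replace (Rpower w ((1 - a) / 2) / (a - 1) * (a - 1)) with (Rpower w ((1 - a) / 2)) by (field; lra).
  exact T.
Qed.

Lemma Etan a w w0 : 1 < a -> 0 < w -> 0 < w0 ->
  Em a w0 + (- (a + 1) / 2) * Rpower w0 (- (a + 1) / 2 - 1) * (w - w0) <= Em a w.
Proof. intros. unfold Em. apply tangent; auto. lra. Qed.

Definition Ph (a d : R) : R := Rpower d (1 - a) / (a - 1).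

Lemma Phtan a d d0 : 1 < a -> 0 < d -> 0 < d0 ->
  Ph a d0 - Rpower d0 (- a) * (d - d0) <= Ph a d.
Proof.
  intros Ha Hd Hd0. unfold Ph.
  pose proof (tangent d0 d (1 - a) Hd0 Hd ltac:(lra)) as T.
  replace (1 - a - 1) with (- a) in T by ring.
  apply Rmult_le_reg_r with (a - 1). lra.
  replace ((Rpower d0 (1 - a) / (a - 1) - Rpower d0 (- a) * (d - d0)) * (a - 1))
    with (Rpower d0 (1 - a) + (1 - a) * Rpower d0 (- a) * (d - d0)) by (field; lra).
  replace (Rpower d (1 - a) / (a - 1) * (a - 1)) with (Rpower d (1 - a)) by (field; lra).
  exact T.
Qed.

Lemma Kf_sq a t : 0 < t -> Kf a (t ^ 2) = Ph a t.
Proof. intros. unfold Kf, Ph. rewrite Rpow_sq by auto. f_equal. f_equal. field. Qed.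

Lemma Em_sq a t : 0 < t -> t * Em a (t ^ 2) = Rpower t (- a).
Proof.
  intros. unfold Em. rewrite Rpow_sq by auto.
  rewrite <- (Rpower_1 t) at 1 by auto. rewrite <- Rpower_plus. f_equal. field.
Qed.

Lemma Em_pos a w : 0 < Em a w.
Proof. apply Rpow_pos. Qed.

Lemma Em_lt a w1 w2 : 1 < a -> 0 < w1 < w2 -> Em a w2 < Em a w1.
Proof. intros. unfold Em. apply Rpow_lt_base; auto. lra. Qed.

Lemma Em_inj a w1 w2 : 1 < a -> 0 < w1 -> 0 < w2 -> Em a w1 = Em a w2 -> w1 = w2.
Proof.
  intros Ha H1 H2 E. destruct (Rtotal_order w1 w2) as [L|[L|L]]; auto.
  - pose proof (Em_lt a w1 w2 Ha (conj H1 L)). lra.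
  - pose proof (Em_lt a w2 w1 Ha (conj H2 L)). lra.
Qed.

Lemma Rpow_inv_le t a : 1 < a -> 0 < t <= 1 -> / t <= Rpower t (- a).
Proof.
  intros. rewrite <- Rpower_m1 by lra. apply Rpow_le_exp_le1; lra.
Qed.

Lemma Rpow_le1 t p : 1 <= t -> p <= 0 -> Rpower t p <= 1.
Proof. intros. rewrite <- (Rpow_1 p). apply Rpow_le_base; lra. Qed.

Lemma cc_pos a m : 0 < m -> 0 < cc a m.
Proof. intros. unfold cc. apply Rinv_0_lt_compat. pose proof (Rpow_pos 2 (-a)). unfold s_const. lra. Qed.

Definition f2 (a m x : R) : R :=
  x - cc a m * (Rpower (1 + x) (- a) - Rpower (1 - x) (- a) + m * Rpower x (- a)).
Definition f1 (a m x : R) : R :=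
  x - cc a m * (Rpower (x + 1) (- a) + Rpower (x - 1) (- a) + m * Rpower x (- a)).
Definition G (a m y : R) : R :=
  1 - cc a m * (2 * Em a (1 + y ^ 2) + m * Em a (y ^ 2)).

Lemma Dx_axis2 a m x : 0 < x < 1 -> Dx a m (x, 0) = f2 a m x.
Proof.
  intros Hx. unfold Dx, f2, sqd. cbn [fst snd].
  replace ((x - -1) ^ 2 + (0 - 0) ^ 2) with ((1 + x) ^ 2) by ring.
  replace ((x - 1) ^ 2 + (0 - 0) ^ 2) with ((1 - x) ^ 2) by ring.
  replace ((x - 0) ^ 2 + (0 - 0) ^ 2) with (x ^ 2) by ring.
  replace ((x - -1) * Em a ((1 + x) ^ 2)) with ((1 + x) * Em a ((1 + x) ^ 2)) by ring.
  replace ((x - 1) * Em a ((1 - x) ^ 2)) with (- ((1 - x) * Em a ((1 - x) ^ 2))) by ring.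
  replace (m * (x - 0) * Em a (x ^ 2)) with (m * (x * Em a (x ^ 2))) by ring.
  rewrite !Em_sq by lra. ring.
Qed.

Lemma Dx_axis1 a m x : 1 < x -> Dx a m (x, 0) = f1 a m x.
Proof.
  intros Hx. unfold Dx, f1, sqd. cbn [fst snd].
  replace ((x - -1) ^ 2 + (0 - 0) ^ 2) with ((x + 1) ^ 2) by ring.
  replace ((x - 1) ^ 2 + (0 - 0) ^ 2) with ((x - 1) ^ 2) by ring.
  replace ((x - 0) ^ 2 + (0 - 0) ^ 2) with (x ^ 2) by ring.
  replace ((x - -1) * Em a ((x + 1) ^ 2)) with ((x + 1) * Em a ((x + 1) ^ 2)) by ring.
  replace (m * (x - 0) * Em a (x ^ 2)) with (m * (x * Em a (x ^ 2))) by ring.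
  rewrite !Em_sq by lra. ring.
Qed.

Lemma Dy_axis a m x : Dy a m (x, 0) = 0.
Proof. unfold Dy. cbn [fst snd]. ring. Qed.

Lemma Dx_vert a m y : Dx a m (0, y) = 0.
Proof.
  unfold Dx, sqd. cbn [fst snd].
  replace ((0 - -1) ^ 2 + (y - 0) ^ 2) with ((0 - 1) ^ 2 + (y - 0) ^ 2) by ring. ring.
Qed.

Lemma Dy_vert a m y : Dy a m (0, y) = y * G a m y.
Proof.
  unfold Dy, G, sqd. cbn [fst snd].
  replace ((0 - -1) ^ 2 + (y - 0) ^ 2) with (1 + y ^ 2) by ring.
  replace ((0 - 1) ^ 2 + (y - 0) ^ 2) with (1 + y ^ 2) by ring.
  replace ((0 - 0) ^ 2 + (y - 0) ^ 2) with (y ^ 2) by ring. ring.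
Qed.

Definition neg (u : R * R) : R * R := (- fst u, - snd u).

Lemma sqd_neg u p : sqd (neg u) (neg p) = sqd u p.
Proof. unfold sqd, neg. cbn [fst snd]. ring. Qed.

Lemma dist2_neg u p : dist2 (neg u) (neg p) = dist2 u p.
Proof. unfold dist2. fold (sqd (neg u) (neg p)). fold (sqd u p). rewrite sqd_neg; auto. Qed.

Lemma neg_pt x y : neg (x, y) = (- x, - y).
Proof. reflexivity. Qed.

Lemma sqd_neg1 u : sqd (neg u) (-1, 0) = sqd u (1, 0).
Proof. unfold sqd, neg. cbn [fst snd]. ring. Qed.
Lemma sqd_neg2 u : sqd (neg u) (1, 0) = sqd u (-1, 0).
Proof. unfold sqd, neg. cbn [fst snd]. ring. Qed.
Lemma sqd_neg3 u : sqd (neg u) (0, 0) = sqd u (0, 0).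
Proof. unfold sqd, neg. cbn [fst snd]. ring. Qed.

Lemma Dx_neg a m u : Dx a m (neg u) = - Dx a m u.
Proof. unfold Dx. rewrite sqd_neg1, sqd_neg2, sqd_neg3. unfold neg; cbn [fst snd]. ring. Qed.
Lemma Dy_neg a m u : Dy a m (neg u) = - Dy a m u.
Proof. unfold Dy. rewrite sqd_neg1, sqd_neg2, sqd_neg3. unfold neg; cbn [fst snd]. ring. Qed.

Lemma V_neg a m u : V a m (neg u) = V a m u.
Proof.
  unfold V, dist2. fold (sqd (neg u) (-1, 0)). fold (sqd (neg u) (1, 0)). fold (sqd (neg u) (0, 0)).
  fold (sqd u (-1, 0)). fold (sqd u (1, 0)). fold (sqd u (0, 0)).
  rewrite sqd_neg1, sqd_neg2, sqd_neg3. unfold neg; cbn [fst snd]. unfold Rdiv. ring.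
Qed.

Lemma in_domain_sqd u : in_domain u <-> (0 < sqd u (-1, 0) /\ 0 < sqd u (1, 0) /\ 0 < sqd u (0, 0)).
Proof.
  split.
  - intros (H0 & H1 & H2). repeat split; apply sqd_pos; auto.
  - intros (H0 & H1 & H2). repeat split; intro E; subst; unfold sqd in *; cbn [fst snd] in *; lra.
Qed.

Lemma in_domain_neg u : in_domain u -> in_domain (neg u).
Proof.
  rewrite !in_domain_sqd. rewrite sqd_neg1, sqd_neg2, sqd_neg3. tauto.
Qed.

Lemma f2_incr a m x y : 1 < a -> 0 < m -> 0 < x -> x < y -> y < 1 -> f2 a m x < f2 a m y.
Proof.
  intros Ha Hm H1 H2 H3. unfold f2.
  pose proof (cc_pos a m Hm) as Hc.
  pose proof (Rpow_lt_base (1 + x) (1 + y) (- a) ltac:(lra) ltac:(lra)).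
  pose proof (Rpow_lt_base (1 - y) (1 - x) (- a) ltac:(lra) ltac:(lra)).
  pose proof (Rpow_lt_base x y (- a) ltac:(lra) ltac:(lra)).
  assert (0 < cc a m * ((Rpower (1 + x) (- a) - Rpower (1 + y) (- a)) + (Rpower (1 - y) (- a) - Rpower (1 - x) (- a))
     + m * (Rpower x (- a) - Rpower y (- a)))).
  { apply Rmult_lt_0_compat; auto. pose proof (Rmult_lt_0_compat m (Rpower x (- a) - Rpower y (- a)) Hm ltac:(lra)). lra. }
  lra.
Qed.

Lemma f1_incr a m x y : 1 < a -> 0 < m -> 1 < x -> x < y -> f1 a m x < f1 a m y.
Proof.
  intros Ha Hm H1 H2. unfold f1.
  pose proof (cc_pos a m Hm) as Hc.
  pose proof (Rpow_lt_base (x + 1) (y + 1) (- a) ltac:(lra) ltac:(lra)).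
  pose proof (Rpow_lt_base (x - 1) (y - 1) (- a) ltac:(lra) ltac:(lra)).
  pose proof (Rpow_lt_base x y (- a) ltac:(lra) ltac:(lra)).
  assert (0 < cc a m * ((Rpower (x + 1) (- a) - Rpower (y + 1) (- a)) + (Rpower (x - 1) (- a) - Rpower (y - 1) (- a))
     + m * (Rpower x (- a) - Rpower y (- a)))).
  { apply Rmult_lt_0_compat; auto. pose proof (Rmult_lt_0_compat m (Rpower x (- a) - Rpower y (- a)) Hm ltac:(lra)). lra. }
  lra.
Qed.

Lemma G_incr a m x y : 1 < a -> 0 < m -> 0 < x -> x < y -> G a m x < G a m y.
Proof.
  intros Ha Hm H1 H2. unfold G.
  pose proof (cc_pos a m Hm) as Hc.
  assert (x ^ 2 < y ^ 2) by nra. assert (0 < x ^ 2) by nra.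
  pose proof (Em_lt a (1 + x ^ 2) (1 + y ^ 2) Ha ltac:(lra)).
  pose proof (Em_lt a (x ^ 2) (y ^ 2) Ha ltac:(lra)).
  assert (0 < cc a m * (2 * (Em a (1 + x ^ 2) - Em a (1 + y ^ 2)) + m * (Em a (x ^ 2) - Em a (y ^ 2)))).
  { apply Rmult_lt_0_compat; auto. pose proof (Rmult_lt_0_compat m (Em a (x ^ 2) - Em a (y ^ 2)) Hm ltac:(lra)). lra. }
  lra.
Qed.

Lemma G_even a m y : G a m (- y) = G a m y.
Proof. unfold G. replace ((- y) ^ 2) with (y ^ 2) by ring. auto. Qed.

Lemma cont_f2 a m x : 0 < x < 1 -> continuity_pt (f2 a m) x.
Proof.
  intros Hx. apply continuity_pt_filterlim.
  assert (H : ex_derive (f2 a m) x) by (unfold f2, Rpower; auto_derive; repeat split; lra).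
  exact (ex_derive_continuous (f2 a m) x H).
Qed.

Lemma cont_f1 a m x : 1 < x -> continuity_pt (f1 a m) x.
Proof.
  intros Hx. apply continuity_pt_filterlim.
  assert (H : ex_derive (f1 a m) x) by (unfold f1, Rpower; auto_derive; repeat split; lra).
  exact (ex_derive_continuous (f1 a m) x H).
Qed.

Lemma cont_G a m x : 0 < x -> continuity_pt (G a m) x.
Proof.
  intros Hx. apply continuity_pt_filterlim.
  assert (H : ex_derive (G a m) x) by (unfold G, Em, Rpower; auto_derive; repeat split; nra).
  exact (ex_derive_continuous (G a m) x H).
Qed.

Lemma ex_r2 a m : 1 < a -> 0 < m -> exists r, 0 < r < 1 /\ f2 a m r = 0.
Proof.
  intros Ha Hm.
  set (c := cc a m). assert (Hc : 0 < c) by (apply cc_pos; auto).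
  set (B := Rpower (1/2) (- a)). assert (HB : 0 < B) by apply Rpow_pos.
  set (lo := Rmin (1/4) (c * m / (2 * (1 + c * B)))).
  assert (Hcm : 0 < c * m) by (apply Rmult_lt_0_compat; auto).
  assert (Hq : 0 < c * m / (2 * (1 + c * B))) by (apply Rdiv_lt_0_compat; nra).
  assert (Hlo : 0 < lo <= 1/4) by (unfold lo; split; [apply Rmin_glb_lt; lra | apply Rmin_l]).
  assert (Hlo2 : lo <= c * m / (2 * (1 + c * B))) by apply Rmin_r.
  set (d := Rmin (1/4) (1 / (2 * (1 + m * B)))).
  assert (Hq2 : 0 < 1 / (2 * (1 + m * B))) by (apply Rdiv_lt_0_compat; nra).
  assert (Hd : 0 < d <= 1/4) by (unfold d; split; [apply Rmin_glb_lt; lra | apply Rmin_l]).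
  assert (Hd2 : d <= 1 / (2 * (1 + m * B))) by apply Rmin_r.
  set (hi := 1 - d).
  assert (F1 : f2 a m lo < 0).
  { unfold f2. fold c.
    pose proof (Rpow_pos (1 + lo) (- a)).
    assert (Rpower (1 - lo) (- a) <= B) by (apply Rpow_le_base; lra).
    pose proof (Rpow_inv_le lo a Ha ltac:(lra)).
    assert (2 * (1 + c * B) <= c * m / lo).
    { apply Rmult_le_reg_r with lo. lra. replace (c * m / lo * lo) with (c * m) by (field; lra).
      apply Rmult_le_reg_r with (/ (2 * (1 + c * B))). apply Rinv_0_lt_compat; nra.
      replace (2 * (1 + c * B) * lo * / (2 * (1 + c * B))) with lo by (field; nra).
      unfold Rdiv in Hlo2. lra. }
    assert (c * m * / lo <= c * m * Rpower lo (- a)) by (apply Rmult_le_compat_l; lra).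
    assert (c * Rpower (1 - lo) (- a) <= c * B) by (apply Rmult_le_compat_l; lra).
    assert (0 < c * Rpower (1 + lo) (- a)) by (apply Rmult_lt_0_compat; auto).
    unfold Rdiv in *. nra. }
  assert (F2 : 0 < f2 a m hi).
  { unfold f2. fold c.
    assert (Rpower (1 + hi) (- a) <= 1) by (apply Rpow_le1; unfold hi; lra).
    assert (Rpower hi (- a) <= B) by (apply Rpow_le_base; unfold hi; lra).
    replace (1 - hi) with d by (unfold hi; ring).
    pose proof (Rpow_inv_le d a Ha ltac:(lra)).
    assert (2 * (1 + m * B) <= / d).
    { apply Rmult_le_reg_r with d. lra. replace (/ d * d) with 1 by (field; lra).
      apply Rmult_le_reg_r with (/ (2 * (1 + m * B))). apply Rinv_0_lt_compat; nra.
      rewrite Rmult_1_l. replace (2 * (1 + m * B) * d * / (2 * (1 + m * B))) with d by (field; nra).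
      unfold Rdiv in Hd2. lra. }
    assert (c * Rpower (1 + hi) (- a) <= c) by (rewrite <- (Rmult_1_r c) at 2; apply Rmult_le_compat_l; lra).
    assert (c * m * Rpower hi (- a) <= c * m * B) by (apply Rmult_le_compat_l; lra).
    assert (c * (2 * (1 + m * B)) <= c * Rpower d (- a)) by (apply Rmult_le_compat_l; lra).
    assert (0 < c * m * B) by (apply Rmult_lt_0_compat; [apply Rmult_lt_0_compat|]; auto).
    match goal with |- 0 < ?h - c * (?X - ?Y + m * ?Z) =>
      replace (h - c * (X - Y + m * Z)) with (h - c * X + c * Y - c * m * Z) by ring end.
    assert (hi >= 3/4) by (unfold hi; lra).
    lra. }
  destruct (Ranalysis5.IVT_interv (f2 a m) lo hi) as [z [Hz Ez]].
  - intros x Hx. apply cont_f2. unfold hi in *; lra.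
  - unfold hi; lra.
  - auto.
  - auto.
  - exists z. split; auto. unfold hi in Hz; lra.
Qed.

Lemma ex_r1 a m : 1 < a -> 0 < m -> exists r, 1 < r /\ f1 a m r = 0.
Proof.
  intros Ha Hm.
  set (c := cc a m). assert (Hc : 0 < c) by (apply cc_pos; auto).
  set (d := Rmin (1/2) (c / 2)).
  assert (Hd : 0 < d <= 1/2) by (unfold d; split; [apply Rmin_glb_lt; lra | apply Rmin_l]).
  assert (Hd2 : d <= c / 2) by apply Rmin_r.
  set (lo := 1 + d). set (hi := 3 + c * (2 + m)).
  assert (F1 : f1 a m lo < 0).
  { unfold f1. fold c. replace (lo - 1) with d by (unfold lo; ring).
    pose proof (Rpow_pos (lo + 1) (- a)). pose proof (Rpow_pos lo (- a)).
    pose proof (Rpow_inv_le d a Ha ltac:(lra)).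
    assert (2 <= c * / d).
    { apply Rmult_le_reg_r with d. lra. replace (c * / d * d) with c by (field; lra). lra. }
    assert (c * / d <= c * Rpower d (- a)) by (apply Rmult_le_compat_l; lra).
    assert (0 < c * Rpower (lo + 1) (- a)) by (apply Rmult_lt_0_compat; auto).
    assert (0 < c * m * Rpower lo (- a)) by (apply Rmult_lt_0_compat; [apply Rmult_lt_0_compat|]; auto).
    match goal with |- ?h - c * (?X + ?Y + m * ?Z) < 0 =>
      replace (h - c * (X + Y + m * Z)) with (h - c * X - c * Y - c * m * Z) by ring end.
    unfold lo in *. lra. }
  assert (F2 : 0 < f1 a m hi).
  { unfold f1. fold c.
    assert (0 <= c * (2 + m)) by (apply Rmult_le_pos; lra).
    assert (Rpower (hi + 1) (- a) <= 1) by (apply Rpow_le1; unfold hi; lra).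
    assert (Rpower (hi - 1) (- a) <= 1) by (apply Rpow_le1; unfold hi; lra).
    assert (Rpower hi (- a) <= 1) by (apply Rpow_le1; unfold hi; lra).
    assert (c * Rpower (hi + 1) (- a) <= c) by (rewrite <- (Rmult_1_r c) at 2; apply Rmult_le_compat_l; lra).
    assert (c * Rpower (hi - 1) (- a) <= c) by (rewrite <- (Rmult_1_r c) at 2; apply Rmult_le_compat_l; lra).
    assert (c * m * Rpower hi (- a) <= c * m) by (rewrite <- (Rmult_1_r (c * m)) at 2; apply Rmult_le_compat_l; nra).
    match goal with |- 0 < ?h - c * (?X + ?Y + m * ?Z) =>
      replace (h - c * (X + Y + m * Z)) with (h - c * X - c * Y - c * m * Z) by ring end.
    assert (hi = 3 + c * (2 + m)) by reflexivity. nra. }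
  destruct (Ranalysis5.IVT_interv (f1 a m) lo hi) as [z [Hz Ez]].
  - intros x Hx. apply cont_f1. unfold lo in *; lra.
  - unfold lo, hi. assert (0 <= c * (2 + m)) by (apply Rmult_le_pos; lra). lra.
  - auto.
  - auto.
  - exists z. split; auto. unfold lo in Hz; lra.
Qed.

Lemma ex_r3 a m : 1 < a -> 0 < m -> exists r, 1 < r /\ G a m r = 0.
Proof.
  intros Ha Hm.
  set (c := cc a m). assert (Hc : 0 < c) by (apply cc_pos; auto).
  set (hi := 2 + c * (2 + m)).
  assert (Hcm : 0 <= c * (2 + m)) by (apply Rmult_le_pos; lra).
  assert (F1 : G a m 1 < 0).
  { unfold G. fold c. replace (1 ^ 2) with 1 by ring. replace (1 + 1) with 2 by ring.
    unfold Em at 2. rewrite Rpow_1.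
    assert (E2 : 2 * Em a 2 = Rpower 2 ((1 - a) / 2)).
    { unfold Em. rewrite <- (Rpower_1 2) at 1 by lra. rewrite <- Rpower_plus. f_equal. field. }
    assert (L : s_const a < 2 * Em a 2).
    { rewrite E2. unfold s_const. apply Rpower_lt; lra. }
    assert (Hs : 0 < s_const a) by apply Rpow_pos.
    unfold c, cc.
    assert (1 < / (s_const a + m) * (2 * Em a 2 + m * 1)).
    { apply Rmult_lt_reg_l with (s_const a + m). lra.
      rewrite <- Rmult_assoc, Rinv_r by lra. lra. }
    lra. }
  assert (F2 : 0 < G a m hi).
  { unfold G. fold c.
    assert (H1 : 1 <= hi ^ 2) by (unfold hi; nra).
    assert (Em a (1 + hi ^ 2) <= / hi).
    { apply Rle_trans with (Em a (hi ^ 2)). unfold Em; apply Rpow_le_base; lra.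
      apply Rle_trans with (/ (hi ^ 2)).
      unfold Em. rewrite <- Rpower_m1 by lra. apply Rpow_le_exp_ge1; lra.
      apply Rinv_le_contravar. unfold hi; lra. unfold hi; nra. }
    assert (Em a (hi ^ 2) <= / hi).
    { apply Rle_trans with (/ (hi ^ 2)).
      unfold Em. rewrite <- Rpower_m1 by lra. apply Rpow_le_exp_ge1; lra.
      apply Rinv_le_contravar. unfold hi; lra. unfold hi; nra. }
    assert (c * (2 * Em a (1 + hi ^ 2) + m * Em a (hi ^ 2)) <= c * ((2 + m) * / hi)).
    { apply Rmult_le_compat_l. lra. nra. }
    assert (c * ((2 + m) * / hi) < 1).
    { replace (c * ((2 + m) * / hi)) with (c * (2 + m) / hi) by (unfold Rdiv; ring).
      apply Rmult_lt_reg_r with hi. unfold hi; lra.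
      unfold Rdiv. rewrite Rmult_assoc, Rinv_l by (unfold hi; lra). unfold hi; lra. }
    lra. }
  destruct (Ranalysis5.IVT_interv (G a m) 1 hi) as [z [Hz Ez]].
  - intros x Hx. apply cont_G. lra.
  - unfold hi; lra.
  - auto.
  - auto.
  - exists z. split; auto. destruct (Req_dec z 1). subst; lra. lra.
Qed.

Lemma offaxis a m u : 1 < a -> 0 < m -> in_domain u -> Dx a m u = 0 -> Dy a m u = 0 -> snd u <> 0 -> fst u = 0.
Proof.
  intros Ha Hm Hd HX HY Hy. rewrite in_domain_sqd in Hd. destruct Hd as (H1 & H2 & H3).
  destruct u as [x y]. cbn [fst snd] in *. unfold Dx, Dy in *. cbn [fst snd] in *.
  set (E1 := Em a (sqd (x, y) (-1, 0))) in *.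
  set (E2 := Em a (sqd (x, y) (1, 0))) in *.
  set (E3 := Em a (sqd (x, y) (0, 0))) in *.
  set (c := cc a m) in *.
  assert (S : 1 - c * (E1 + E2 + m * E3) = 0).
  { apply Rmult_eq_reg_l with y; auto.
    replace (y * (1 - c * (E1 + E2 + m * E3))) with (y - c * ((y - 0) * E1 + (y - 0) * E2 + m * (y - 0) * E3)) by ring.
    rewrite HY. ring. }
  assert (E : c * (E1 - E2) = 0).
  { replace (c * (E1 - E2)) with (x * (1 - c * (E1 + E2 + m * E3)) - (x - c * ((x - -1) * E1 + (x - 1) * E2 + m * (x - 0) * E3))) by ring.
    rewrite HX, S. ring. }
  assert (Hc : 0 < c) by (apply cc_pos; auto).
  assert (E1 = E2).
  { apply Rmult_eq_reg_l with c. lra. lra. }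
  apply Em_inj in H; auto. unfold sqd in H. cbn [fst snd] in H. nra.
Qed.

Lemma uniq_f2 a m r x : 1 < a -> 0 < m -> 0 < r < 1 -> f2 a m r = 0 -> 0 < x < 1 -> f2 a m x = 0 -> x = r.
Proof.
  intros. destruct (Rtotal_order x r) as [L|[L|L]]; auto.
  - pose proof (f2_incr a m x r); lra.
  - pose proof (f2_incr a m r x); lra.
Qed.

Lemma uniq_f1 a m r x : 1 < a -> 0 < m -> 1 < r -> f1 a m r = 0 -> 1 < x -> f1 a m x = 0 -> x = r.
Proof.
  intros. destruct (Rtotal_order x r) as [L|[L|L]]; auto.
  - pose proof (f1_incr a m x r); lra.
  - pose proof (f1_incr a m r x); lra.
Qed.

Lemma uniq_G a m r x : 1 < a -> 0 < m -> 1 < r -> G a m r = 0 -> 0 < x -> G a m x = 0 -> x = r.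
Proof.
  intros. destruct (Rtotal_order x r) as [L|[L|L]]; auto.
  - pose proof (G_incr a m x r); lra.
  - pose proof (G_incr a m r x); lra.
Qed.

Lemma pos_axis_classify a m r1 r2 x : 1 < a -> 0 < m ->
  0 < r2 < 1 -> f2 a m r2 = 0 -> 1 < r1 -> f1 a m r1 = 0 ->
  0 < x -> x <> 1 -> Dx a m (x, 0) = 0 -> x = r2 \/ x = r1.
Proof.
  intros. destruct (Rlt_dec x 1).
  - left. rewrite Dx_axis2 in H7 by lra. apply (uniq_f2 a m r2 x); auto.
  - right. assert (1 < x) by (destruct (Req_dec x 1); [tauto|lra]).
    rewrite Dx_axis1 in H7 by lra. apply (uniq_f1 a m r1 x); auto.
Qed.

Lemma classify a m r1 r2 r3 u : 1 < a -> 0 < m ->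
  0 < r2 < 1 -> f2 a m r2 = 0 -> 1 < r1 -> f1 a m r1 = 0 -> 1 < r3 -> G a m r3 = 0 ->
  ((in_domain u /\ Dx a m u = 0 /\ Dy a m u = 0) <->
   (u = (r2, 0) \/ u = (- r2, 0) \/ u = (r1, 0) \/ u = (- r1, 0)
        \/ u = (0, r3) \/ u = (0, - r3))).
Proof.
  intros Ha Hm Hr2 F2 Hr1 F1 Hr3 G3. split.
  - intros (Hd & HX & HY).
    destruct (Req_dec (snd u) 0) as [Hy|Hy].
    + destruct u as [x y]. cbn [fst snd] in Hy. subst y.
      destruct Hd as (N0 & N1 & N2).
      assert (x <> 0) by (intro; subst; auto).
      assert (x <> 1) by (intro; subst; auto).
      assert (x <> -1) by (intro; subst; auto).
      destruct (Rlt_dec 0 x).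
      * destruct (pos_axis_classify a m r1 r2 x) as [->| ->]; auto; tauto.
      * assert (Dx a m (- x, 0) = 0).
        { replace (- x, 0) with (neg (x, 0)) by (unfold neg; cbn [fst snd]; f_equal; ring).
          rewrite Dx_neg, HX. ring. }
        destruct (pos_axis_classify a m r1 r2 (- x)) as [E|E]; auto; try lra.
        -- right; left. f_equal. lra.
        -- right; right; right; left. f_equal. lra.
    + pose proof (offaxis a m u Ha Hm Hd HX HY Hy) as Hx.
      destruct u as [x y]. cbn [fst snd] in *. subst x.
      rewrite Dy_vert in HY. apply Rmult_integral in HY. destruct HY as [|HG]; [lra|].
      destruct (Rlt_dec 0 y).
      * right; right; right; right; left. f_equal. apply (uniq_G a m r3 y); auto.
      * right; right; right; right; right. f_equal.
        assert (- y = r3). { apply (uniq_G a m r3 (- y)); auto. lra. rewrite G_even; auto. }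
        lra.
  - intros H. assert (Hc := cc_pos a m Hm).
    destruct H as [->|[->|[->|[->|[->| ->]]]]].
    + split. rewrite in_domain_sqd; unfold sqd; cbn [fst snd]; repeat split; nra.
      split. rewrite Dx_axis2; auto. apply Dy_axis.
    + split. rewrite in_domain_sqd; unfold sqd; cbn [fst snd]; repeat split; nra.
      split. replace (- r2, 0) with (neg (r2, 0)) by (unfold neg; cbn [fst snd]; f_equal; ring).
      rewrite Dx_neg, Dx_axis2; auto. rewrite F2; ring. apply Dy_axis.
    + split. rewrite in_domain_sqd; unfold sqd; cbn [fst snd]; repeat split; nra.
      split. rewrite Dx_axis1; auto. apply Dy_axis.
    + split. rewrite in_domain_sqd; unfold sqd; cbn [fst snd]; repeat split; nra.
      split. replace (- r1, 0) with (neg (r1, 0)) by (unfold neg; cbn [fst snd]; f_equal; ring).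
      rewrite Dx_neg, Dx_axis1; auto. rewrite F1; ring. apply Dy_axis.
    + split. rewrite in_domain_sqd; unfold sqd; cbn [fst snd]; repeat split; nra.
      split. apply Dx_vert. rewrite Dy_vert, G3; ring.
    + split. rewrite in_domain_sqd; unfold sqd; cbn [fst snd]; repeat split; nra.
      split. apply Dx_vert. rewrite Dy_vert, G_even, G3; ring.
Qed.

Lemma V_w a m q : 1 < a -> in_domain q ->
  V a m q = (fst q ^ 2 + snd q ^ 2) / 2 + cc a m * Kf a (sqd q (-1, 0))
     + cc a m * Kf a (sqd q (1, 0)) + m * cc a m * Kf a (sqd q (0, 0)).
Proof.
  intros Ha Hd. rewrite in_domain_sqd in Hd. destruct Hd as (H1 & H2 & H3).
  unfold V, dist2. fold (sqd q (-1, 0)). fold (sqd q (1, 0)). fold (sqd q (0, 0)).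
  rewrite !phi_sqrt by auto. unfold cc, Rdiv. ring.
Qed.

Lemma global_min a m r3 q : 1 < a -> 0 < m -> 1 < r3 -> G a m r3 = 0 -> in_domain q ->
  V a m (0, r3) <= V a m q.
Proof.
  intros Ha Hm Hr3 G3 Hq.
  assert (Hd0 : in_domain (0, r3)) by (rewrite in_domain_sqd; unfold sqd; cbn [fst snd]; repeat split; nra).
  rewrite (V_w a m q), (V_w a m (0, r3)) by auto.
  pose proof Hq as Hq'. rewrite in_domain_sqd in Hq'. destruct Hq' as (H1 & H2 & H3).
  destruct q as [x y]. unfold sqd in *. cbn [fst snd] in *.
  replace ((0 - -1) ^ 2 + (r3 - 0) ^ 2) with (1 + r3 ^ 2) by ring.
  replace ((0 - 1) ^ 2 + (r3 - 0) ^ 2) with (1 + r3 ^ 2) by ring.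
  replace ((0 - 0) ^ 2 + (r3 - 0) ^ 2) with (r3 ^ 2) by ring.
  set (W1 := (x - -1) ^ 2 + (y - 0) ^ 2) in *.
  set (W2 := (x - 1) ^ 2 + (y - 0) ^ 2) in *.
  set (W3 := (x - 0) ^ 2 + (y - 0) ^ 2) in *.
  assert (Hw1 : 0 < 1 + r3 ^ 2) by nra. assert (Hw0 : 0 < r3 ^ 2) by nra.
  pose proof (Ktan a W1 (1 + r3 ^ 2) Ha H1 Hw1) as T1.
  pose proof (Ktan a W2 (1 + r3 ^ 2) Ha H2 Hw1) as T2.
  pose proof (Ktan a W3 (r3 ^ 2) Ha H3 Hw0) as T3.
  set (c := cc a m) in *. assert (Hc : 0 < c) by (apply cc_pos; auto).
  unfold G in G3. fold c in G3.
  set (E1 := Em a (1 + r3 ^ 2)) in *. set (E0 := Em a (r3 ^ 2)) in *.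
  set (K1 := Kf a (1 + r3 ^ 2)) in *. set (K0 := Kf a (r3 ^ 2)) in *.
  apply (Rmult_le_compat_l c) in T1; [|lra].
  apply (Rmult_le_compat_l c) in T2; [|lra].
  apply (Rmult_le_compat_l (c * m)) in T3; [|nra].
  assert (Key : (x ^ 2 + y ^ 2) / 2 + c * (K1 - 1 / 2 * E1 * (W1 - (1 + r3 ^ 2)))
     + c * (K1 - 1 / 2 * E1 * (W2 - (1 + r3 ^ 2))) + c * m * (K0 - 1 / 2 * E0 * (W3 - r3 ^ 2))
     = (0 ^ 2 + r3 ^ 2) / 2 + c * K1 + c * K1 + m * c * K0).
  { unfold W1, W2, W3.
    replace (c * m * E0) with (1 - 2 * (c * E1)) by lra. 
    unfold Rdiv. 
    replace (c * (K1 - 1 * / 2 * E1 * ((x - -1) ^ 2 + (y - 0) ^ 2 - (1 + r3 ^ 2))) +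
     c * (K1 - 1 * / 2 * E1 * ((x - 1) ^ 2 + (y - 0) ^ 2 - (1 + r3 ^ 2))))
     with (2 * (c * K1) - (c * E1) * (x ^ 2 + y ^ 2 - r3 ^ 2)) by (field).
    replace (c * m * (K0 - 1 * / 2 * E0 * ((x - 0) ^ 2 + (y - 0) ^ 2 - r3 ^ 2)))
      with (c * m * K0 - / 2 * (c * m * E0) * (x ^ 2 + y ^ 2 - r3 ^ 2)) by ring.
    replace (c * m * E0) with (1 - 2 * (c * E1)) by lra.
    field. }
  replace (m * c * K0) with (c * m * K0) in * by ring.
  unfold W3 in *. lra.
Qed.

Lemma term_upper a A s k : 1 < a -> 0 < A -> 0 < s -> 0 < k ->
  k * Kf a (A + s) <= k * Kf a A - s / 2 * (k * Em a A)
     + s / 2 * s * (k * ((a + 1) / 2 * Rpower A (- (a + 1) / 2 - 1))).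
Proof.
  intros Ha HA Hs Hk.
  pose proof (Ktan a A (A + s) Ha HA ltac:(lra)) as T1.
  pose proof (Etan a (A + s) A Ha ltac:(lra) HA) as T2.
  set (R := Rpower A (- (a + 1) / 2 - 1)) in *.
  assert (HR : 0 < R) by apply Rpow_pos.
  replace (A - (A + s)) with (- s) in T1 by ring.
  replace (A + s - A) with s in T2 by ring.
  assert (T3 : s / 2 * (Em a A + - (a + 1) / 2 * R * s) <= s / 2 * Em a (A + s)).
  { apply Rmult_le_compat_l; lra. }
  assert (T4 : Kf a (A + s) <= Kf a A - s / 2 * Em a A + s / 2 * s * ((a + 1) / 2 * R)).
  { unfold Rdiv in *. lra. }
  apply (Rmult_le_compat_l k) in T4; [|lra].
  unfold Rdiv in *. lra.
Qed.

Lemma sqd_vert r y p : sqd (r, y) p = sqd (r, 0) p + y ^ 2 + (- 2 * y * snd p).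
Proof. unfold sqd. cbn [fst snd]. ring. Qed.

Lemma vert_lower a m r : 1 < a -> 0 < m -> 0 < r -> r <> 1 -> Dx a m (r, 0) = 0 ->
  exists t0, 0 < t0 /\ forall y, 0 < y <= t0 -> V a m (r, y) < V a m (r, 0).
Proof.
  intros Ha Hm Hr Hr1 HD.
  set (c := cc a m). assert (Hc : 0 < c) by (apply cc_pos; auto).
  assert (Hcm : 0 < c * m) by (apply Rmult_lt_0_compat; auto).
  set (A1 := sqd (r, 0) (-1, 0)). set (A2 := sqd (r, 0) (1, 0)). set (A0 := sqd (r, 0) (0, 0)).
  assert (EA1 : A1 = (r + 1) ^ 2) by (unfold A1, sqd; cbn [fst snd]; ring).
  assert (EA2 : A2 = (r - 1) ^ 2) by (unfold A2, sqd; cbn [fst snd]; ring).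
  assert (EA0 : A0 = r ^ 2) by (unfold A0, sqd; cbn [fst snd]; ring).
  assert (HA2 : 0 < A2).
  { rewrite EA2. assert (r - 1 <> 0) by lra. simpl; rewrite Rmult_1_r; apply Rsqr_pos_lt; auto. }
  assert (HA1 : A2 < A1) by (rewrite EA1, EA2; nra).
  assert (HA0 : 0 < A0) by (rewrite EA0; nra).
  set (E1 := Em a A1). set (E2 := Em a A2). set (E0 := Em a A0).
  assert (HE : E1 < E2) by (apply Em_lt; auto; lra).
  set (B0 := 1 - (c * E1 + c * E2 + c * m * E0)).
  assert (HB0 : B0 < 0).
  { assert (r * B0 = c * (E1 - E2)).
    { unfold Dx in HD. cbn [fst snd] in HD. fold A1 A2 A0 E1 E2 E0 c in HD.
      unfold B0. rewrite EA1, EA2 in *. 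
      replace (r * (1 - (c * E1 + c * E2 + c * m * E0))) with
        ((r - c * ((r - -1) * E1 + (r - 1) * E2 + m * (r - 0) * E0)) + c * (E1 - E2)) by ring.
      rewrite HD. ring. }
    assert (0 < c * (E2 - E1)) by (apply Rmult_lt_0_compat; lra).
    assert (c * (E1 - E2) < 0) by (replace (c * (E1 - E2)) with (- (c * (E2 - E1))) by ring; lra).
    destruct (Rlt_dec B0 0) as [|N]; auto.
    assert (0 <= r * B0) by (apply Rmult_le_pos; lra). lra. }
  set (D := fun A => (a + 1) / 2 * Rpower A (- (a + 1) / 2 - 1)).
  assert (HDp : forall A, 0 < D A).
  { intros. unfold D. apply Rmult_lt_0_compat. lra. apply Rpow_pos. }
  set (C := c * D A1 + c * D A2 + c * m * D A0).
  assert (HC : 0 < C).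
  { unfold C. pose proof (HDp A1); pose proof (HDp A2); pose proof (HDp A0).
    assert (0 < c * D A1) by (apply Rmult_lt_0_compat; auto).
    assert (0 < c * D A2) by (apply Rmult_lt_0_compat; auto).
    assert (0 < c * m * D A0) by (apply Rmult_lt_0_compat; auto). lra. }
  set (t0 := Rmin 1 (- B0 / (2 * (C + 1)))).
  assert (Ht0p : 0 < - B0 / (2 * (C + 1))) by (apply Rdiv_lt_0_compat; lra).
  exists t0. split. unfold t0; apply Rmin_glb_lt; lra.
  intros y [Hy Hyt].
  assert (Hy1 : y <= 1) by (eapply Rle_trans; [exact Hyt | apply Rmin_l]).
  assert (Hy2 : y <= - B0 / (2 * (C + 1))) by (eapply Rle_trans; [exact Hyt | apply Rmin_r]).
  set (s := y ^ 2). assert (Hs : 0 < s) by (unfold s; nra). assert (Hsy : s <= y) by (unfold s; nra).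
  assert (Hd1 : in_domain (r, y)).
  { assert (0 < y ^ 2) by (apply pow_lt; lra).
    rewrite in_domain_sqd. rewrite (sqd_vert r y (-1, 0)), (sqd_vert r y (1, 0)), (sqd_vert r y (0, 0)). cbn [snd]. fold A1 A2 A0. repeat split; lra. }
  assert (Hd0 : in_domain (r, 0)).
  { rewrite in_domain_sqd. fold A1 A2 A0. repeat split; lra. }
  rewrite (V_w a m (r, y)), (V_w a m (r, 0)) by auto.
  rewrite (sqd_vert r y (-1, 0)), (sqd_vert r y (1, 0)), (sqd_vert r y (0, 0)). cbn [fst snd]. fold A1 A2 A0 c.
  replace (A1 + y ^ 2 + - 2 * y * 0) with (A1 + s) by (unfold s; ring).
  replace (A2 + y ^ 2 + - 2 * y * 0) with (A2 + s) by (unfold s; ring).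
  replace (A0 + y ^ 2 + - 2 * y * 0) with (A0 + s) by (unfold s; ring).
  pose proof (term_upper a A1 s c Ha ltac:(lra) Hs Hc) as U1.
  pose proof (term_upper a A2 s c Ha ltac:(lra) Hs Hc) as U2.
  pose proof (term_upper a A0 s (c * m) Ha ltac:(lra) Hs Hcm) as U0.
  fold (D A1) (D A2) (D A0) E1 E2 E0 in U1, U2, U0.
  assert (sC : s * C < - B0).
  { assert (s * C <= - B0 / (2 * (C + 1)) * C) by (apply Rmult_le_compat_r; lra).
    assert (- B0 / (2 * (C + 1)) * C < - B0).
    { unfold Rdiv. apply Rmult_lt_reg_r with (2 * (C + 1)). lra.
      replace (- B0 * / (2 * (C + 1)) * C * (2 * (C + 1))) with (- B0 * C) by (field; lra). nra. }
    lra. }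
  assert (Fin : s / 2 * (B0 + s * C) < 0).
  { assert (0 < s / 2 * - (B0 + s * C)) by (apply Rmult_lt_0_compat; lra).
    replace (s / 2 * (B0 + s * C)) with (- (s / 2 * - (B0 + s * C))) by ring. lra. }
  replace (m * c) with (c * m) by ring.
  replace ((r ^ 2 + y ^ 2) / 2) with (r ^ 2 / 2 + s / 2) by (unfold s, Rdiv; ring).
  replace ((r ^ 2 + 0 ^ 2) / 2) with (r ^ 2 / 2) by (unfold Rdiv; ring).
  unfold B0, C in Fin.
  assert (Exp : s / 2 * (1 - (c * E1 + c * E2 + c * m * E0) + s * (c * D A1 + c * D A2 + c * m * D A0))
     = s / 2 - s / 2 * (c * E1) - s / 2 * (c * E2) - s / 2 * (c * m * E0)
       + s / 2 * s * (c * D A1) + s / 2 * s * (c * D A2) + s / 2 * s * (c * m * D A0)) by ring.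
  rewrite Exp in Fin.
  lra.
Qed.

Lemma V_axis2 a m x : 1 < a -> 0 < x < 1 ->
  V a m (x, 0) = x ^ 2 / 2 + cc a m * Ph a (1 + x) + cc a m * Ph a (1 - x) + m * cc a m * Ph a x.
Proof.
  intros Ha Hx.
  assert (Hd : in_domain (x, 0)) by (rewrite in_domain_sqd; unfold sqd; cbn [fst snd]; repeat split; nra).
  rewrite V_w by auto. unfold sqd. cbn [fst snd].
  replace ((x - -1) ^ 2 + (0 - 0) ^ 2) with ((1 + x) ^ 2) by ring.
  replace ((x - 1) ^ 2 + (0 - 0) ^ 2) with ((1 - x) ^ 2) by ring.
  replace ((x - 0) ^ 2 + (0 - 0) ^ 2) with (x ^ 2) by ring.
  rewrite !Kf_sq by lra. unfold Rdiv. ring.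
Qed.

Lemma V_axis1 a m x : 1 < a -> 1 < x ->
  V a m (x, 0) = x ^ 2 / 2 + cc a m * Ph a (x + 1) + cc a m * Ph a (x - 1) + m * cc a m * Ph a x.
Proof.
  intros Ha Hx.
  assert (Hd : in_domain (x, 0)) by (rewrite in_domain_sqd; unfold sqd; cbn [fst snd]; repeat split; nra).
  rewrite V_w by auto. unfold sqd. cbn [fst snd].
  replace ((x - -1) ^ 2 + (0 - 0) ^ 2) with ((x + 1) ^ 2) by ring.
  replace ((x - 1) ^ 2 + (0 - 0) ^ 2) with ((x - 1) ^ 2) by ring.
  replace ((x - 0) ^ 2 + (0 - 0) ^ 2) with (x ^ 2) by ring.
  rewrite !Kf_sq by lra. unfold Rdiv. ring.
Qed.

Lemma horiz2 a m r x : 1 < a -> 0 < m -> 0 < r < 1 -> f2 a m r = 0 -> 0 < x < 1 -> x <> r ->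
  V a m (r, 0) < V a m (x, 0).
Proof.
  intros Ha Hm Hr F Hx Hxr.
  rewrite !V_axis2 by auto.
  set (c := cc a m) in *. assert (Hc : 0 < c) by (apply cc_pos; auto).
  pose proof (Phtan a (1 + x) (1 + r) Ha ltac:(lra) ltac:(lra)) as T1.
  pose proof (Phtan a (1 - x) (1 - r) Ha ltac:(lra) ltac:(lra)) as T2.
  pose proof (Phtan a x r Ha ltac:(lra) ltac:(lra)) as T3.
  apply (Rmult_le_compat_l c) in T1; [|lra].
  apply (Rmult_le_compat_l c) in T2; [|lra].
  apply (Rmult_le_compat_l (m * c)) in T3; [|nra].
  unfold f2 in F. fold c in F.
  assert (Z : (x - r) * (r - c * (Rpower (1 + r) (- a) - Rpower (1 - r) (- a) + m * Rpower r (- a))) = 0)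
    by (rewrite F; ring).
  assert (P : 0 < (x - r) ^ 2) by (assert (x - r <> 0) by lra; simpl; rewrite Rmult_1_r; apply Rsqr_pos_lt; auto).
  unfold Rdiv. lra.
Qed.

Lemma horiz1 a m r x : 1 < a -> 0 < m -> 1 < r -> f1 a m r = 0 -> 1 < x -> x <> r ->
  V a m (r, 0) < V a m (x, 0).
Proof.
  intros Ha Hm Hr F Hx Hxr.
  rewrite !V_axis1 by auto.
  set (c := cc a m) in *. assert (Hc : 0 < c) by (apply cc_pos; auto).
  pose proof (Phtan a (x + 1) (r + 1) Ha ltac:(lra) ltac:(lra)) as T1.
  pose proof (Phtan a (x - 1) (r - 1) Ha ltac:(lra) ltac:(lra)) as T2.
  pose proof (Phtan a x r Ha ltac:(lra) ltac:(lra)) as T3.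
  apply (Rmult_le_compat_l c) in T1; [|lra].
  apply (Rmult_le_compat_l c) in T2; [|lra].
  apply (Rmult_le_compat_l (m * c)) in T3; [|nra].
  unfold f1 in F. fold c in F.
  assert (Z : (x - r) * (r - c * (Rpower (r + 1) (- a) + Rpower (r - 1) (- a) + m * Rpower r (- a))) = 0)
    by (rewrite F; ring).
  assert (P : 0 < (x - r) ^ 2) by (assert (x - r <> 0) by lra; simpl; rewrite Rmult_1_r; apply Rsqr_pos_lt; auto).
  unfold Rdiv. lra.
Qed.

Lemma dist2_axis x r : dist2 (x, 0) (r, 0) = Rabs (x - r).
Proof.
  unfold dist2. cbn [fst snd]. rewrite <- sqrt_Rsqr_abs. f_equal. unfold Rsqr. ring.
Qed.

Lemma dist2_vert r y : 0 < y -> dist2 (r, y) (r, 0) = y.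
Proof.
  intros. unfold dist2. cbn [fst snd]. replace ((r - r) ^ 2 + (y - 0) ^ 2) with (y ^ 2) by ring.
  apply sqrt_pow2. lra.
Qed.

Lemma saddle_gen a m r : 1 < a -> 0 < m -> 0 < r -> r <> 1 -> critical_point a m (r, 0) ->
  (forall eps, 0 < eps -> exists x, Rabs (x - r) < eps /\ in_domain (x, 0) /\ V a m (r, 0) < V a m (x, 0)) ->
  saddle_point a m (r, 0).
Proof.
  intros Ha Hm Hr Hr1 Hc Hhi. split; auto.
  intros eps Heps. split.
  - apply crit_iff in Hc; auto. destruct Hc as (Hd & HX & HY).
    destruct (vert_lower a m r Ha Hm Hr Hr1 HX) as [t0 [Ht0 Hlow]].
    set (y := Rmin (eps / 2) t0).
    assert (Hy : 0 < y) by (unfold y; apply Rmin_glb_lt; lra).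
    assert (Hy1 : y <= eps / 2) by apply Rmin_l.
    assert (Hy2 : y <= t0) by apply Rmin_r.
    exists (r, y). split; [|split].
    + rewrite in_domain_sqd. rewrite (sqd_vert r y (-1, 0)), (sqd_vert r y (1, 0)), (sqd_vert r y (0, 0)). cbn [snd].
      rewrite in_domain_sqd in Hd. destruct Hd as (D1 & D2 & D3).
      assert (0 < y ^ 2) by (apply pow_lt; lra). repeat split; lra.
    + rewrite dist2_vert; lra.
    + apply Hlow; lra.
  - destruct (Hhi eps Heps) as [x [H1 [H2 H3]]]. exists (x, 0). split; [exact H2|split].
    rewrite dist2_axis; auto. auto.
Qed.

Lemma neg_axis r : (- r, 0) = neg (r, 0).
Proof. unfold neg. cbn [fst snd]. f_equal. ring. Qed.

Lemma crit_neg a m u : 1 < a -> 0 < m -> critical_point a m u -> critical_point a m (neg u).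
Proof.
  intros Ha Hm H. apply crit_iff in H; auto. apply crit_iff; auto.
  destruct H as (Hd & HX & HY). split. apply in_domain_neg; auto.
  rewrite Dx_neg, Dy_neg, HX, HY. split; ring.
Qed.

Lemma neg_neg u : neg (neg u) = u.
Proof. destruct u. unfold neg. cbn [fst snd]. f_equal; ring. Qed.

Lemma saddle_neg a m u : 1 < a -> 0 < m -> saddle_point a m u -> saddle_point a m (neg u).
Proof.
  intros Ha Hm [Hc H]. split. apply crit_neg; auto.
  intros eps Heps. destruct (H eps Heps) as [[q1 (A1 & B1 & C1)] [q2 (A2 & B2 & C2)]].
  split.
  - exists (neg q1). split. apply in_domain_neg; auto. rewrite dist2_neg, !V_neg. auto.
  - exists (neg q2). split. apply in_domain_neg; auto. rewrite dist2_neg, !V_neg. auto.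
Qed.

Theorem mainTheorem11 (alpha mu : R) (Halpha : 1 < alpha < 3) (Hmu : 0 < mu) :
  exists r1 r2 r3 : R,
    0 < r2 < 1 /\ 1 < r1 /\ 1 < r3 /\
    (forall u : R * R, critical_point alpha mu u <->
       (u = (r2, 0) \/ u = (- r2, 0) \/ u = (r1, 0) \/ u = (- r1, 0)
        \/ u = (0, r3) \/ u = (0, - r3))) /\
    saddle_point alpha mu (r2, 0) /\ saddle_point alpha mu (- r2, 0) /\
    saddle_point alpha mu (r1, 0) /\ saddle_point alpha mu (- r1, 0) /\
    critical_point alpha mu (0, r3) /\ local_min_point alpha mu (0, r3) /\
    critical_point alpha mu (0, - r3) /\ local_min_point alpha mu (0, - r3).
Proof.
  assert (Ha : 1 < alpha) by lra.
  destruct (ex_r1 alpha mu Ha Hmu) as [r1 [Hr1 F1]].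
  destruct (ex_r2 alpha mu Ha Hmu) as [r2 [Hr2 F2]].
  destruct (ex_r3 alpha mu Ha Hmu) as [r3 [Hr3 G3]].
  assert (CI : forall u, critical_point alpha mu u <->
       (u = (r2, 0) \/ u = (- r2, 0) \/ u = (r1, 0) \/ u = (- r1, 0)
        \/ u = (0, r3) \/ u = (0, - r3))).
  { intros u. rewrite crit_iff by auto. apply classify; auto. }
  assert (S2 : saddle_point alpha mu (r2, 0)).
  { apply saddle_gen; auto; try lra.
    - apply CI; tauto.
    - intros eps Heps. set (d := Rmin eps (1 - r2) / 2).
      assert (Hd0 : 0 < Rmin eps (1 - r2)) by (apply Rmin_glb_lt; lra).
      assert (Hd1 : Rmin eps (1 - r2) <= eps) by apply Rmin_l.
      assert (Hd2 : Rmin eps (1 - r2) <= 1 - r2) by apply Rmin_r.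
      exists (r2 + d). split; [|split].
      + replace (r2 + d - r2) with d by ring. rewrite Rabs_pos_eq; unfold d; lra.
      + rewrite in_domain_sqd; unfold sqd; cbn [fst snd]; unfold d; repeat split; nra.
      + apply horiz2; auto; unfold d; lra. }
  assert (S1 : saddle_point alpha mu (r1, 0)).
  { apply saddle_gen; auto; try lra.
    - apply CI; tauto.
    - intros eps Heps. exists (r1 + eps / 2). split; [|split].
      + replace (r1 + eps / 2 - r1) with (eps / 2) by ring. rewrite Rabs_pos_eq; lra.
      + rewrite in_domain_sqd; unfold sqd; cbn [fst snd]; repeat split; nra.
      + apply horiz1; auto; lra. }
  assert (LM : local_min_point alpha mu (0, r3)).
  { exists 1. split. lra. intros q Hq _. apply global_min; auto. }
  assert (E3 : (0, - r3) = neg (0, r3)) by (unfold neg; cbn [fst snd]; f_equal; ring).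
  exists r1, r2, r3.
  split; [exact Hr2|]. split; [exact Hr1|]. split; [exact Hr3|]. split; [exact CI|].
  split; [exact S2|]. split; [rewrite neg_axis; apply saddle_neg; auto|].
  split; [exact S1|]. split; [rewrite neg_axis; apply saddle_neg; auto|].
  split; [apply CI; tauto|]. split; [exact LM|]. split; [apply CI; tauto|].
  exists 1. split. lra. intros q Hq _. rewrite E3, V_neg. apply global_min; auto.
Qed.
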